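(* Let $h\geq 3$ and $v\equiv 0\pmod{2h}$. If there exists a $(K_2,S(C_h))$-URD$(v;r,s)$, then $(r,s)\in J(v)$, where $J(v)=\{(3+4x,\ \frac{v-4}{2}-2x) : x=0,1,\ldots,\frac{v-4}{4}\}$ if $v\equiv 0\pmod{4h}$, or if $v\equiv 2h\pmod{4h}$ and $h$ is even; and $J(v)=\{(1+4x,\ \frac{v-2}{2}-2x) : x=0,1,\ldots,\frac{v-2}{4}\}$ if $v\equiv 2h\pmod{4h}$ and $h$ is odd.
   Context: For $h\geq 3$, an $h$-sun is the graph on $2h$ distinct vertices $a_1,\ldots,a_h,b_1,\ldots,b_h$ consisting of the $h$-cycle $(a_1,a_2,\ldots,a_h)$ together with the edges $\{a_i,b_i\}$, $i=1,\ldots,h$. A $(K_2,S(C_h))$-URD$(v;r,s)$ is a partition of the edge set of the complete graph $K_v$ into $r$ classes each of which is a 1-factor (perfect matching) of $K_v$, and $s$ classes each of which is a set of vertex-disjoint $h$-suns covering every vertex of $K_v$ exactly once. *)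

(* Defs.v *)
From mathcomp Require Import all_boot.
Set Implicit Arguments. Unset Strict Implicit. Unset Printing Implicit Defensive.

Definition Kedges (v : nat) : {set {set 'I_v}} := [set e : {set 'I_v} | #|e| == 2].

Definition one_factor (v : nat) (M : {set {set 'I_v}}) : Prop :=
  M \subset Kedges v /\ forall x : 'I_v, #|[set e in M | x \in e]| = 1.

Definition sun_edges (v h : nat) (a b : 'I_h -> 'I_v) : {set {set 'I_v}} :=
  [set [set a i; a (ordS i)] | i : 'I_h] :|: [set [set a i; b i] | i : 'I_h].

(* Sun j has a-vertices  sv j i true  and b-vertices  sv j i false.
   Bijectivity of the uncurried map = the 2h vertices of each sun are distinct,
   distinct suns are vertex-disjoint, and every vertex is covered. *)
Definition sun_factor (v h : nat) (S : {set {set 'I_v}}) : Prop :=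
  exists (k : nat) (sv : 'I_k -> 'I_h -> bool -> 'I_v),
    bijective (fun p : 'I_k * 'I_h * bool => sv p.1.1 p.1.2 p.2) /\
    S = \bigcup_(j < k) sun_edges (fun i => sv j i true) (fun i => sv j i false).

Definition URD (h v r s : nat) : Prop :=
  exists (F : 'I_r -> {set {set 'I_v}}) (S : 'I_s -> {set {set 'I_v}}),
    (forall i, one_factor (F i)) /\ (forall j, sun_factor h (S j)) /\
    forall e : {set 'I_v}, e \in Kedges v ->
      #|[set i | e \in F i]| + #|[set j | e \in S j]| = 1.

(* Main.v *)
Require Import Defs.
From mathcomp Require Import all_boot zify.
Set Implicit Arguments. Unset Strict Implicit. Unset Printing Implicit Defensive.
Lemma val_ordS h (i : 'I_h) : val (ordS i) = if i.+1 == h then 0 else i.+1.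
Proof.
rewrite /=; have Hi := ltn_ord i; case: eqP => [->|ne]; first by rewrite modnn.
by rewrite modn_small //; lia.
Qed.
Lemma ordS_neq h (i : 'I_h) : 2 <= h -> ordS i != i.
Proof. move=> h2; apply/eqP => /(congr1 val); rewrite val_ordS.
have := ltn_ord i; case: eqP => /=; lia. Qed.
Lemma ordS2_neq h (i : 'I_h) : 3 <= h -> ordS (ordS i) != i.
Proof. move=> h2; apply/eqP => /(congr1 val); rewrite !val_ordS.
have := ltn_ord i; case: eqP => /=; case: eqP => /=; try lia.
Qed.
Lemma ordS_pred_neq h (i : 'I_h) : 3 <= h -> ordS i != ord_pred i.
Proof. move=> h3; apply/negP => /eqP E; move: (ordS2_neq i h3); by rewrite E ord_predK eqxx. Qed.
Definition deg v (X : {set {set 'I_v}}) (x : 'I_v) := #|[set e in X | x \in e]|.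

Lemma sun_props h v (S : {set {set 'I_v}}) : 3 <= h -> sun_factor h S ->
  S \subset Kedges v /\ exists a : 'I_v -> bool,
    (forall x, deg S x = (a x).*2.+1) /\ (#|[set x | a x]|).*2 = v.
Proof.
move=> h3 [k [sv [[g fg gf] ->]]].
set f := fun p : 'I_k * 'I_h * bool => sv p.1.1 p.1.2 p.2 in fg gf.
have svinj : forall j i b j' i' b', (sv j i b == sv j' i' b') = ((j, i, b) == (j', i', b')).
  move=> j i b j' i' b'; apply/eqP/eqP => [E|[-> -> ->]] //.
  by rewrite -[(j,i,b)]fg -[(j',i',b')]fg /f /= E.
split.
  apply/subsetP => e /bigcupP [j _] /setUP [] /imsetP [i _ ->];
  rewrite inE cards2 svinj ?xpair_eqE ?eqxx ?andbT ?andbF //.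
  by move: (ordS_neq i (ltnW h3)); rewrite eq_sym; case: (_ == _).
exists (fun x => (g x).2); split; last first.
  have -> : [set x | (g x).2] = f @: [set p | p.2].
    apply/setP => x; rewrite inE; apply/idP/imsetP => [H|[p Hp ->]].
      by exists (g x); rewrite ?inE ?gf.
    by rewrite fg; rewrite inE in Hp.
  rewrite card_imset; last exact: can_inj fg.
  have -> : [set p : 'I_k * 'I_h * bool | p.2] = setX setT [set true].
    by apply/setP => -[p b]; rewrite !inE /=; case: b.
  rewrite cardsX cardsT cards1 card_prod !card_ord.
  have := bij_eq_card (Bijective fg gf); rewrite !card_prod !card_ord card_bool => <-.
  by rewrite muln1 muln2.
move=> x; rewrite /deg.
have [[[j0 i0] c] ->] : exists p, x = f p by exists (g x); rewrite gf.
rewrite fg /f /=.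
set Sx := \bigcup_(j < k) _.
set A := [set sv j0 i0 true; sv j0 (ordS i0) true].
set B := [set sv j0 (ord_pred i0) true; sv j0 i0 true].
set C := [set sv j0 i0 true; sv j0 i0 false].
have key : forall e, (e \in Sx) && (sv j0 i0 c \in e) = (e == C) || c && ((e == A) || (e == B)).
  move=> e; apply/idP/idP.
    move=> /andP [/bigcupP [j _] /setUP [] /imsetP [i _ ->]];
      rewrite /A /B /C !inE !svinj !xpair_eqE => /orP [] /andP [/andP [/eqP -> /eqP ->] /eqP ->];
      rewrite ?eqxx ?orbT //.
    by rewrite ordSK eqxx !orbT.
  case/orP => [/eqP ->|/andP [cT /orP [] /eqP ->]].
  - apply/andP; split; last by rewrite /C !inE; case: c; rewrite eqxx ?orbT.
    apply/bigcupP; exists j0 => //; apply/setUP; right; apply/imsetP; by exists i0.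
  - apply/andP; split; last by rewrite /A !inE cT eqxx.
    apply/bigcupP; exists j0 => //; apply/setUP; left.
    apply/imsetP; by exists i0.
  - apply/andP; split; last by rewrite /B !inE cT eqxx orbT.
    apply/bigcupP; exists j0 => //; apply/setUP; left.
    apply/imsetP; exists (ord_pred i0) => //; by rewrite ord_predK.
case: c key => key.
  have -> : [set e in Sx | sv j0 i0 true \in e] = C |: (A |: [set B]).
    by apply/setP => e; rewrite inE key !inE.
  rewrite !cardsU1 cards1.
  have nCA : C \notin A |: [set B].
    have hC : sv j0 i0 false \in C by rewrite !inE eqxx orbT.
    rewrite !inE; apply/norP; split; apply/negP => /eqP E; move: hC;
    rewrite E !inE !svinj !xpair_eqE !andbF //.
  have nAB : A \notin [set B].
    rewrite !inE; apply/negP => /eqP E.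
    have : sv j0 (ordS i0) true \in A by rewrite !inE eqxx orbT.
    rewrite E !inE !svinj !xpair_eqE !eqxx /= andbT.
    move: (ordS_pred_neq i0 h3) (ordS_neq i0 (ltnW h3)).
    by do 2 case: (_ == _).
  by rewrite nCA nAB.
have -> : [set e in Sx | sv j0 i0 false \in e] = [set C].
  by apply/setP => e; rewrite inE key !inE orbF.
by rewrite cards1.
Qed.

Lemma card_sum (T : finType) (P : pred T) : #|[set i | P i]| = \sum_i P i.
Proof. rewrite -sum1dep_card big_mkcond; apply: eq_bigr => i _; by case: (P i). Qed.

Lemma degK v (x : 'I_v) : #|[set e in Kedges v | x \in e]| = v.-1.
Proof.
have -> : [set e in Kedges v | x \in e] = (fun y => [set x; y]) @: [set~ x].
  apply/setP => e; rewrite !inE; apply/idP/imsetP.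
    case/andP => /cards2P [a [b [ab ->]]]; rewrite !inE => /orP [] /eqP E; subst.
      by exists b; rewrite // !inE eq_sym.
    by exists a; [rewrite !inE | rewrite setUC].
  move=> [y]; rewrite !inE => yx ->; rewrite cards2 (eq_sym x y) yx /=.
  by rewrite !inE eqxx.
rewrite card_in_imset ?cardsC1 ?card_ord //.
move=> y z; rewrite !inE => yx zx E.
have : z \in [set x; y] by rewrite E !inE eqxx orbT.
by rewrite !inE (negbTE zx) /= => /eqP.
Qed.

Lemma deg_sum v (X : {set {set 'I_v}}) (x : 'I_v) : X \subset Kedges v ->
  deg X x = \sum_(e in Kedges v | x \in e) (e \in X).
Proof.
move=> /subsetP sub; rewrite /deg -sum1dep_card [RHS]big_mkcondr /=.
rewrite big_mkcond [RHS]big_mkcond; apply: eq_bigr => e _ /=.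
rewrite !inE; case eX: (e \in X); case: (x \in e) => //=.
all: try by case: (_ == _).
by move: (sub e eX); rewrite inE => ->.
Qed.

Lemma sumc n c : \sum_(i < n) c = n * c.
Proof. by rewrite big_const_ord iter_addn_0 mulnC. Qed.

Lemma sumdouble n (F : 'I_n -> nat) : \sum_i (F i).*2 = (\sum_i F i).*2.
Proof. by rewrite (big_morph double doubleD (erefl 0.*2)). Qed.

Unset Implicit Arguments.
Theorem lemma2p2 (h v r s : nat) :
  3 <= h -> 0 < v -> v %% (2 * h) = 0 -> URD h v r s ->
  (((v %% (4 * h) = 0) \/ (v %% (4 * h) = 2 * h /\ ~~ odd h)) ->
     exists2 x : nat, x <= (v - 4) %/ 4 & r = 3 + 4 * x /\ s = (v - 4) %/ 2 - 2 * x) /\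
  ((v %% (4 * h) = 2 * h /\ odd h) ->
     exists2 x : nat, x <= (v - 2) %/ 4 & r = 1 + 4 * x /\ s = (v - 2) %/ 2 - 2 * x).
Proof.
move=> h3 v0 vmod [F [S [HF [HS Hpart]]]].
pose a j x := deg (S j) x == 3.
have HSj : forall j, S j \subset Kedges v /\ (forall x, deg (S j) x = (a j x).*2.+1)
    /\ (#|[set x | a j x]|).*2 = v.
  move=> j; have [sub [a0 [Ha0 Hc]]] := sun_props h3 (HS j).
  have E : forall x, a j x = a0 x by move=> x; rewrite /a Ha0; case: (a0 x).
  split=> //; split=> [x|]; first by rewrite E Ha0.
  apply: etrans Hc; congr (_.*2); apply: eq_card => x; by rewrite !inE E.
have Hdeg : forall x, v.-1 = r + \sum_j (a j x).*2.+1.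
  move=> x; rewrite -(degK x) -sum1dep_card.
  transitivity (\sum_(e | (e \in Kedges v) && (x \in e)) (\sum_i (e \in F i) + \sum_j (e \in S j))).
    apply: eq_bigr => e /andP [eK _]; have := Hpart e eK; rewrite !card_sum => ->.
    by [].
  rewrite big_split /= exchange_big [X in _ + X]exchange_big /=.
  congr (_ + _).
    rewrite (eq_bigr (fun _ => 1)); first by rewrite sumc muln1.
    move=> i _; rewrite -deg_sum; [exact: (HF i).2 x | by case: (HF i)].
  by apply eq_bigr => j _; rewrite -deg_sum ?(HSj j).2.1 // (HSj j).1.
have Hsumj : forall j, \sum_x (a j x).*2.+1 = v + v.
  move=> j; rewrite (eq_bigr (fun x => (a j x).*2 + 1)); last by move=> *; rewrite addn1.
  by rewrite big_split /= sumc sumdouble -card_sum (HSj j).2.2 muln1.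
have Htot : v.-1 = r + s.*2.
  have : \sum_(x < v) v.-1 = \sum_(x < v) (r + \sum_j (a j x).*2.+1).
    by apply eq_bigr => x _; exact: Hdeg.
  rewrite big_split exchange_big /= !sumc (eq_bigr (fun _ => v + v)); last by move=> j _; exact: Hsumj.
  rewrite sumc => E.
  apply/eqP; rewrite -(eqn_pmul2l v0); apply/eqP; by rewrite E -!muln2; rewrite mulnDr addnn -muln2 mulnDr -mulnA mulnCA.
have [N HN] : exists N, s = N.*2.
  have := Hdeg (Ordinal v0).
  rewrite (eq_bigr (fun j => (a j (Ordinal v0)).*2 + 1)); last by move=> *; rewrite addn1.
  rewrite big_split /= sumc sumdouble muln1 Htot => E.
  by exists (\sum_j a j (Ordinal v0)); lia.
have Ev := divn_eq v (4 * h).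
move: (v %/ (4 * h)) Ev => q Ev.
have Eh := odd_double_half h.
move: (h./2) Eh => t Eh.
have fin4 : forall m, v = 4 * m ->
    exists2 x : nat, x <= (v - 4) %/ 4 & r = 3 + 4 * x /\ s = (v - 4) %/ 2 - 2 * x.
  move=> m Em.
  have -> : (v - 4) %/ 4 = m - 1 by rewrite Em -{2}(muln1 4) -mulnBr mulKn.
  have -> : (v - 4) %/ 2 = (m - 1).*2.
    by rewrite Em -{2}(muln1 4) -mulnBr -[4]/(2 * 2) -mulnA mulKn // mul2n.
  exists (m - 1 - N); lia.
split.
  case=> [Hm | [Hm Ho]]; rewrite Hm in Ev.
    apply: (fin4 (q * h)); by rewrite Ev addn0 mulnCA.
  have {}Eh : h = t.*2 by move: Ho Eh; case: (odd h) => //= _ ->.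
  apply: (fin4 (q * h + t)); rewrite Ev mulnCA mulnDr; congr (_ + _); rewrite Eh; lia.
case=> Hm Ho; rewrite Hm in Ev.
have {}Eh : h = t.*2.+1 by move: Ho Eh; case: (odd h) => //= _ <-.
have [m Em] : exists m, v = 4 * m + 2.
  exists (q * h + t); rewrite Ev mulnCA mulnDr -addnA; congr (_ + _); rewrite Eh; lia.
have -> : (v - 2) %/ 4 = m by rewrite Em addnK mulKn.
have -> : (v - 2) %/ 2 = m.*2 by rewrite Em addnK -[4]/(2 * 2) -mulnA mulKn // mul2n.
exists (m - N); lia.
Qed.
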